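(* Consider the one-parameter family of maps $f(x,r)=x^2\exp(r-x)+k$ with bifurcation parameter $r\in\mathbb{R}$, where $k\in[0,3-2\sqrt2)$ is fixed. Then the family undergoes a fold bifurcation. More precisely: for $k=0$, the family undergoes a fold bifurcation at the fixed point $x_0=1$ for the bifurcation value $r_0=1$; for fixed $0<k<3-2\sqrt2$, there are two bifurcation values \[ r_{0,1}=x_{0,1}-\ln\big((2-x_{0,1})x_{0,1}\big),\qquad r_{0,2}=x_{0,2}-\ln\big((2-x_{0,2})x_{0,2}\big), \] where \[ x_{0,1}=\frac{k+1-\sqrt{k^2-6k+1}}{2},\qquad x_{0,2}=\frac{k+1+\sqrt{k^2-6k+1}}{2}, \] and for $i=1,2$ the family undergoes a fold bifurcation at the fixed point $x_{0,i}$ of $f(\cdot,r_{0,i})$ for the bifurcation value $r=r_{0,i}$.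
   Context: For a smooth one-parameter family $x\mapsto f(x,a)$ of maps of $\mathbb{R}$ with a fixed point $x_0$ at $a=a_0$, one says that a fold (saddle-node, tangent) bifurcation occurs at $x_0$ for $a=a_0$ if $\frac{\partial f}{\partial x}(x_0,a_0)=1$ and the nondegeneracy conditions (A.1) $\frac{\partial^2 f}{\partial x^2}(x_0,a_0)\neq0$ and (A.2) $\frac{\partial f}{\partial a}(x_0,a_0)\neq 0$ hold; then smooth invertible changes of coordinates and parameter transform the system into $\eta\mapsto\beta+\eta\pm\eta^2+O(\eta^3)$. *)

(* Defs.v *)
From Stdlib Require Import Reals.
From Coquelicot Require Import Coquelicot.
Open Scope R_scope.

Definition smooth_family (f : R -> R -> R) : Prop :=
  forall (n : nat) (x a : R),
    ex_derive_n (fun y => f y a) n x /\ ex_derive_n (fun b => f x b) n a.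

Definition fold_bifurcation (f : R -> R -> R) (x0 a0 : R) : Prop :=
  smooth_family f /\
  f x0 a0 = x0 /\
  Derive (fun x => f x a0) x0 = 1 /\
  Derive_n (fun x => f x a0) 2 x0 <> 0 /\
  Derive (fun a => f x0 a) a0 <> 0.

Definition fam (k : R) (x r : R) : R := x ^ 2 * exp (r - x) + k.

Definition x01 (k : R) : R := (k + 1 - sqrt (k ^ 2 - 6 * k + 1)) / 2.
Definition x02 (k : R) : R := (k + 1 + sqrt (k ^ 2 - 6 * k + 1)) / 2.
Definition rval (x : R) : R := x - ln ((2 - x) * x).

(* Main.v *)
Require Import Defs.
From Stdlib Require Import Reals Lra Psatz.
From Coquelicot Require Import Coquelicot.
Open Scope R_scope.

Lemma gen_smooth (P : (R -> R) -> Prop) :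
  (forall f, P f -> exists g, P g /\ forall x, is_derive f x (g x)) ->
  forall n f, P f -> (exists g, P g /\ forall x, Derive_n f n x = g x) /\
                     forall x, ex_derive_n f n x.
Proof.
  intros H n. induction n as [|n IH]; intros f Pf.
  - split; [exists f; split; auto | intros; exact I].
  - destruct (IH f Pf) as [[g [Pg Hg]] _].
    destruct (H g Pg) as [h [Ph Hh]].
    split.
    + exists h; split; auto. intro x. simpl.
      rewrite (Derive_ext _ _ x Hg). apply is_derive_unique. apply Hh.
    + intro x. simpl. apply (ex_derive_ext g); [intro t; symmetry; apply Hg|].
      exists (h x). apply Hh.
Qed.

Lemma smooth_fam k : smooth_family (fam k).
Proof.
  intros n x a. split.
  - set (P := fun f : R -> R => exists p q c e, forall y,
                f y = (p * y ^ 2 + q * y + c) * exp (a - y) + e).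
    assert (HP : P (fun y => fam k y a)).
    { exists 1, 0, 0, k. intro y. unfold fam. ring. }
    refine (proj2 (gen_smooth P _ n _ HP) x).
    intros f [p [q [c [e Hf]]]].
    exists (fun y => (- p * y ^ 2 + (2 * p - q) * y + (q - c)) * exp (a - y) + 0).
    split. { exists (-p), (2*p-q), (q-c), 0. intro; ring. }
    intro y. eapply is_derive_ext. { intro t. symmetry. apply Hf. }
    auto_derive; auto. unfold Rminus. ring.
  - set (P := fun f : R -> R => exists c e, forall b,
                f b = c * exp (b - x) + e).
    assert (HP : P (fun b => fam k x b)).
    { exists (x^2), k. intro b. unfold fam. ring. }
    refine (proj2 (gen_smooth P _ n _ HP) a).
    intros f [c [e Hf]].
    exists (fun b => c * exp (b - x) + 0).
    split. { exists c, 0. intro; ring. }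
    intro y. eapply is_derive_ext. { intro t. symmetry. apply Hf. }
    auto_derive; auto. unfold Rminus. ring.
Qed.

Lemma fold_gen k x : 0 < x < 2 -> x ^ 2 - (1 + k) * x + 2 * k = 0 ->
  x ^ 2 - 4 * x + 2 <> 0 -> fold_bifurcation (fam k) x (rval x).
Proof.
  intros [h0 h2] hq hn.
  set (E := exp (rval x - x)).
  assert (HE : E * ((2 - x) * x) = 1).
  { unfold E, rval. replace (x - ln ((2 - x) * x) - x) with (- ln ((2 - x) * x)) by ring.
    rewrite exp_Ropp, exp_ln by nra. field. nra. }
  assert (Epos : 0 < E) by apply exp_pos.
  split; [apply smooth_fam|].
  split.
  { unfold fam. fold E.
    assert (k - x = (k - x) * (E * ((2 - x) * x))) by (rewrite HE; ring).
    assert (x ^ 2 * E + k - x = E * x * (x ^ 2 - (1 + k) * x + 2 * k)) by nra.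
    rewrite hq in H0. lra. }
  assert (D1 : forall y, Derive (fun y => fam k y (rval x)) y
                = (2 * y - y ^ 2) * exp (rval x - y)).
  { intro y. apply is_derive_unique. unfold fam. auto_derive; auto. unfold Rminus. ring. }
  split.
  { rewrite D1. fold E. nra. }
  split.
  { simpl. rewrite (Derive_ext (fun x0 => Derive (fun x1 => fam k x1 (rval x)) x0) _ x D1).
    rewrite (is_derive_unique _ x ((x ^ 2 - 4 * x + 2) * exp (rval x - x))).
    - fold E. intro Hc. apply Rmult_integral in Hc. lra.
    - auto_derive; auto. unfold Rminus. ring. }
  rewrite (is_derive_unique _ (rval x) (x ^ 2 * exp (rval x - x))).
  - fold E. nra.
  - unfold fam. auto_derive; auto. unfold Rminus. ring.
Qed.

Lemma no_infl k x : 0 <= k -> k ^ 2 - 6 * k + 1 > 0 ->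
  x ^ 2 - (1 + k) * x + 2 * k = 0 -> x ^ 2 - 4 * x + 2 <> 0.
Proof.
  intros hk hD hq hc.
  assert (h1 : (k - 3) * x = 2 * k - 2) by nra.
  assert (h2 : (3 - k) ^ 2 * (x ^ 2 - 4 * x + 2) = -2 * (k ^ 2 - 6 * k + 1)).
  { replace ((3 - k) ^ 2 * (x ^ 2 - 4 * x + 2)) with
      (((k - 3) * x) ^ 2 + 4 * (3 - k) * ((k - 3) * x) + 2 * (3 - k) ^ 2) by ring.
    rewrite h1. ring. }
  rewrite hc in h2. nra.
Qed.

Theorem theorem2p3 (k : R) (hk0 : 0 <= k) (hk1 : k < 3 - 2 * sqrt 2) :
  (k = 0 -> fold_bifurcation (fam k) 1 1) /\
  (0 < k ->
     fold_bifurcation (fam k) (x01 k) (rval (x01 k)) /\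
     fold_bifurcation (fam k) (x02 k) (rval (x02 k))).
Proof.
  assert (s2 : sqrt 2 * sqrt 2 = 2) by (apply sqrt_sqrt; lra).
  assert (s2p : 0 <= sqrt 2) by apply sqrt_pos.
  assert (hD : k ^ 2 - 6 * k + 1 > 0) by nra.
  set (s := sqrt (k ^ 2 - 6 * k + 1)).
  assert (ss : s * s = k ^ 2 - 6 * k + 1) by (apply sqrt_sqrt; lra).
  assert (sp : 0 <= s) by apply sqrt_pos.
  assert (s3 : s < 3 - k) by nra.
  split.
  - intro hk. subst k.
    replace 1 with (rval 1) at 2.
    2:{ unfold rval. replace ((2 - 1) * 1) with 1 by ring. rewrite ln_1. ring. }
    apply fold_gen; [lra | ring | apply no_infl with 0; try lra; ring].
  - intro hk. assert (sk : s < k + 1) by nra.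
    split; apply fold_gen; unfold x01, x02; fold s;
      try (apply no_infl with k; try lra); try lra; nra.
Qed.
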